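(* Let $n,k_1,k_2\in\mathbb N$ with $k_1+k_2<n$. Every Side-By-Side percentile mechanism, i.e. every percentile mechanism $\mathcal{PM}_{\vec v}$, $\vec v\in[0,1]^2$, that places the facility of capacity $k_1$ at $x_i$ and the facility of capacity $k_2$ at $x_{i+1}$ for some $i\in\{1,\dots,n-1\}$ (in sorted order), is Equilibrium Stable.
   Context: There are $n$ agents with positions $\vec x\in[0,1]^n$ and two facilities with capacities $k_1,k_2$; a location $\vec y=(y_1,y_2)$ places the facility of capacity $k_j$ at $y_j$. A fixed priority order breaks ties. FCFS game induced by $(\vec x,\vec y)$: each agent $i$ chooses $s_i\in\{1,2\}$; $\mathcal S_j$ = agents choosing $j$; $T_j\subseteq\mathcal S_j$ = the $\min(k_j,|\mathcal S_j|)$ agents of $\mathcal S_j$ closest to $y_j$ (ties by priority); utility $u_i=1-|x_i-y_j|$ if $i\in T_j$, else $0$. $NE(\vec x,\vec y)$ = set of pure Nash equilibria; $SW_\gamma=\sum_iu_i$. A mechanism $M:[0,1]^n\to\mathbb R^2$ is absolutely truthful if for every $i,\vec x,x_i'\in[0,1],\vec s_{-i}$: $\max_{s_i}u_i(\vec x,M(\vec x);s_i,\vec s_{-i})\ge\max_{s_i'}u_i(\vec x,M(x_i',\vec x_{-i});s_i',\vec s_{-i})$; it is Equilibrium Stable (ES) if it is absolutely truthful and for every $\vec x$ all $\gamma\in NE(\vec x,M(\vec x))$ give the same $SW_\gamma(\vec x,M(\vec x))$. Percentile mechanism $\mathcal{PM}_{\vec v}$: sort reports $x_1\le\dots\le x_n$,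 set $y_j=x_{\lfloor(n-1)v_j\rfloor+1}$. *)

(* Defs.v *)
From mathcomp Require Import all_boot all_order all_algebra perm.
From mathcomp Require Import reals.
Set Implicit Arguments. Unset Strict Implicit. Unset Printing Implicit Defensive.
Import Order.TTheory GRing.Theory Num.Theory.
Local Open Scope ring_scope.

Section FCFS.
Variables (R : realFieldType) (n : nat).

Definition cap (k1 k2 : nat) (j : 'I_2) : nat := if j == ord0 then k1 else k2.
Definition loc (y : R * R) (j : 'I_2) : R := if j == ord0 then y.1 else y.2.

Definition upd {T : Type} (f : 'I_n -> T) (i : 'I_n) (a : T) : 'I_n -> T :=
  fun l => if l == i then a else f l.

(* agent l precedes agent i for facility j (closer to y_j; ties broken by
   the fixed priority order prio, smaller value = higher priority) *)
Definition precedes (prio : {perm 'I_n}) (x : 'I_n -> R) (yj : R) (l i : 'I_n) : bool :=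
  (`|x l - yj| < `|x i - yj|) ||
  ((`|x l - yj| == `|x i - yj|) && (prio l < prio i)%N).

(* T_j : agents choosing j that are among the min(k_j,|S_j|) closest to y_j *)
Definition served (k1 k2 : nat) (prio : {perm 'I_n}) (x : 'I_n -> R) (y : R * R)
    (s : 'I_n -> 'I_2) (j : 'I_2) : {set 'I_n} :=
  [set i | (s i == j) &&
     (#|[set l | (s l == j) && precedes prio x (loc y j) l i]| < cap k1 k2 j)%N].

Definition util (k1 k2 : nat) (prio : {perm 'I_n}) (x : 'I_n -> R) (y : R * R)
    (s : 'I_n -> 'I_2) (i : 'I_n) : R :=
  if i \in served k1 k2 prio x y s (s i) then 1 - `|x i - loc y (s i)| else 0.

Definition best_util (k1 k2 : nat) (prio : {perm 'I_n}) (x : 'I_n -> R) (y : R * R)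
    (s : 'I_n -> 'I_2) (i : 'I_n) : R :=
  Num.max (util k1 k2 prio x y (upd s i ord0) i) (util k1 k2 prio x y (upd s i (@Ordinal 2 1 isT)) i).

Definition is_NE (k1 k2 : nat) (prio : {perm 'I_n}) (x : 'I_n -> R) (y : R * R)
    (s : 'I_n -> 'I_2) : Prop :=
  forall (i : 'I_n) (a : 'I_2),
    util k1 k2 prio x y (upd s i a) i <= util k1 k2 prio x y s i.

Definition SW (k1 k2 : nat) (prio : {perm 'I_n}) (x : 'I_n -> R) (y : R * R)
    (s : 'I_n -> 'I_2) : R :=
  \sum_(i < n) util k1 k2 prio x y s i.

Definition in01 (t : R) : bool := (0 <= t) && (t <= 1).

Definition absolutely_truthful (k1 k2 : nat) (prio : {perm 'I_n})
    (M : ('I_n -> R) -> R * R) : Prop :=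
  forall (i : 'I_n) (x : 'I_n -> R) (xi' : R) (s : 'I_n -> 'I_2),
    (forall l, in01 (x l)) -> in01 xi' ->
    best_util k1 k2 prio x (M (upd x i xi')) s i <= best_util k1 k2 prio x (M x) s i.

Definition equilibrium_stable (k1 k2 : nat) (prio : {perm 'I_n})
    (M : ('I_n -> R) -> R * R) : Prop :=
  absolutely_truthful k1 k2 prio M /\
  forall (x : 'I_n -> R), (forall l, in01 (x l)) ->
    forall s s' : 'I_n -> 'I_2,
      is_NE k1 k2 prio x (M x) s -> is_NE k1 k2 prio x (M x) s' ->
      SW k1 k2 prio x (M x) s = SW k1 k2 prio x (M x) s'.

End FCFS.

Section PM.
Variables (R : archiRealFieldType) (n : nat).

(* reports sorted nondecreasingly; (sorted_reports x)`_m is x_{m+1} in the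
   paper's 1-indexed notation *)
Definition sorted_reports (x : 'I_n -> R) : seq R :=
  sort <=%R [seq x i | i <- enum 'I_n].

Definition pidx (v : R) : nat := `|Num.floor ((n.-1)%:R * v)|%N.

(* percentile mechanism PM_v : y_j = x_{floor((n-1) v_j) + 1} *)
Definition PM (v : R * R) (x : 'I_n -> R) : R * R :=
  ((sorted_reports x)`_(pidx v.1), (sorted_reports x)`_(pidx v.2)).

End PM.

(* Main.v *)
Require Import Defs.
From mathcomp Require Import all_boot all_order all_algebra perm.
From mathcomp Require Import reals.
From mathcomp Require Import lra zify.
Set Implicit Arguments. Unset Strict Implicit. Unset Printing Implicit Defensive.
Import Order.TTheory GRing.Theory Num.Theory.
Local Open Scope ring_scope.

Section Abs.
Variables (R : realType) (n : nat) (k1 k2 : nat) (prio : {perm 'I_n}).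
Variables (x : 'I_n -> R) (y : R * R).

Definition val c j := 1 - `|x c - loc y j|.
Definition cnt (s : 'I_n -> 'I_2) j c :=
  #|[set l | (s l == j) && precedes prio x (loc y j) l c]|.

Lemma prec_irr t l : precedes prio x t l l = false.
Proof. by rewrite /precedes ltxx eqxx ltnn. Qed.

Lemma prec_trans t l m p : precedes prio x t l m -> precedes prio x t m p ->
  precedes prio x t l p.
Proof.
rewrite /precedes => /orP[h1|/andP[/eqP e1 h1]] /orP[h2|/andP[/eqP e2 h2]].
- by rewrite (lt_trans h1 h2).
- by rewrite -e2 h1.
- by rewrite e1 h2.
- by rewrite e1 e2 eqxx (ltn_trans h1 h2) orbT.
Qed.

Lemma prec_total t l m : l != m ->
  precedes prio x t l m || precedes prio x t m l.
Proof.
move=> ne; rewrite /precedes.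
case: (ltgtP `|x l - t| `|x m - t|) => //= e.
have : prio l != prio m by apply: contra ne => /eqP/perm_inj ->.
rewrite neq_ltn => /orP[->|->] //; by rewrite orbT.
Qed.

Lemma prec_le t l m : precedes prio x t l m -> `|x l - t| <= `|x m - t|.
Proof. by rewrite /precedes => /orP[/ltW //|/andP[/eqP -> _]]. Qed.

Lemma util_E s c : util k1 k2 prio x y s c =
  if (cnt s (s c) c < cap k1 k2 (s c))%N then val c (s c) else 0.
Proof.
rewrite /util /served /cnt /val inE eqxx /=. done.
Qed.

Lemma cnt_upd s c j : cnt (upd s c j) j c = cnt s j c.
Proof.
rewrite /cnt; apply: eq_card => l; rewrite !inE /upd.
case: (eqVneq l c) => [->|//]; by rewrite prec_irr !andbF.
Qed.

Lemma util_upd s c j : util k1 k2 prio x y (upd s c j) c =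
  if (cnt s j c < cap k1 k2 j)%N then val c j else 0.
Proof.
rewrite util_E; have -> : upd s c j c = j by rewrite /upd eqxx.
by rewrite cnt_upd.
Qed.


Definition rk t l := #|[set m | precedes prio x t m l]|.

Lemma rk_lt t l m : precedes prio x t l m -> (rk t l < rk t m)%N.
Proof.
move=> h; apply: proper_card; apply/properP; split.
  by apply/subsetP => p; rewrite !inE => hp; exact: prec_trans hp h.
by exists l; rewrite !inE ?prec_irr.
Qed.

Lemma card_served_le s j (X : {set 'I_n}) :
  (forall l, l \in X -> s l = j /\ (cnt s j l < cap k1 k2 j)%N) ->
  (#|X| <= cap k1 k2 j)%N.
Proof.
move=> hX.
have [->|[m0 m0X]] := set_0Vmem X; first by rewrite cards0.
case: (arg_maxnP (rk (loc y j)) m0X) => m mX0 hmax.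
have mX : m \in X by [].
have hmax2 : forall l, l \in X -> (rk (loc y j) l <= rk (loc y j) m)%N by move=> l lX; exact: hmax.
have [smj cm] := hX m mX.
rewrite (cardsD1 m) mX add1n.
apply: leq_ltn_trans cm; apply: subset_leq_card; apply/subsetP => l.
rewrite !inE => /andP[lm lX].
have [slj _] := hX l lX.
rewrite slj eqxx /=.
case/orP: (prec_total (loc y j) lm) => // h.
have := hmax2 l lX; have := rk_lt h. move=> a b.
by move: (leq_trans a b); rewrite ltnn.
Qed.

Definition NE s := is_NE k1 k2 prio x y s.

Lemma NE_dev s : NE s -> forall c j,
  (if (cnt s j c < cap k1 k2 j)%N then val c j else 0) <= util k1 k2 prio x y s c.
Proof. by move=> hs c j; rewrite -util_upd; exact: hs. Qed.


Lemma util_ge0 (hval : forall c j, 0 <= val c j) s c : 0 <= util k1 k2 prio x y s c.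
Proof. by rewrite util_E; case: ifP. Qed.

Lemma step (hval : forall c j, 0 <= val c j) s s' a : NE s -> NE s' ->
  util k1 k2 prio x y s' a < util k1 k2 prio x y s a ->
  [/\ (cnt s (s a) a < cap k1 k2 (s a))%N,
      util k1 k2 prio x y s a = val a (s a) &
  exists b, [/\ s' b = s a, s b != s a, precedes prio x (loc y (s a)) b a,
     (cnt s' (s a) b < cap k1 k2 (s a))%N & (cnt s (s a) b < cap k1 k2 (s a))%N]].
Proof.
move=> hs hs' hlt.
have hu := util_E s a.
set j := s a in hu *.
have hca : (cnt s j a < cap k1 k2 j)%N.
  apply/negPn/negP => hn; move: hlt; rewrite hu (negbTE hn).
  by rewrite ltNge (util_ge0 hval).
have ua : util k1 k2 prio x y s a = val a j by rewrite hu hca.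
have hc'a : (cap k1 k2 j <= cnt s' j a)%N.
  rewrite leqNgt; apply/negP => hn.
  have := NE_dev hs' a j; rewrite hn => h.
  by move: (le_lt_trans h hlt); rewrite ua ltxx.
split => //.
pose A := [set l | (s l == j) && precedes prio x (loc y j) l a].
pose A' := [set l | (s' l == j) && precedes prio x (loc y j) l a].
have cA : cnt s j a = #|A| by [].
have cA' : cnt s' j a = #|A'| by [].
have [b0 b0in] : exists b0, b0 \in A' :\: A.
  apply/set0Pn; apply/negP => /eqP h0.
  have : A' \subset A by rewrite -setD_eq0 h0.
  move/subset_leq_card => h1.
  by move: (leq_trans hc'a (leq_trans (eq_leq cA') (leq_trans h1 (eq_leq (esym cA))))); rewrite leqNgt hca.
case: (arg_minnP (rk (loc y j)) b0in) => b bin0 hmin.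
have bin : b \in A' :\: A by [].
have hmin2 : forall l, l \in A' :\: A -> (rk (loc y j) b <= rk (loc y j) l)%N by move=> l lA; exact: hmin.
move: bin; rewrite !inE => /andP[hnA /andP[/eqP sb pba]].
have sbj : s b != j by apply: contra hnA => ->; rewrite pba.
have hsubA : forall l, precedes prio x (loc y j) l b -> (s l == j) -> l \in A.
  by move=> l hl hsl; rewrite inE hsl (prec_trans hl pba).
exists b; split => //.
- apply: leq_ltn_trans hca; rewrite cA; apply: subset_leq_card; apply/subsetP => l.
  rewrite inE => /andP[/eqP s'l plb].
  apply/negPn/negP => lnA.
  have : l \in A' :\: A by rewrite in_setD lnA /= inE s'l eqxx (prec_trans plb pba).
  move/hmin2 => h; have := rk_lt plb.
  by move=> h2; move: (leq_trans h2 h); rewrite ltnn.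
- apply: leq_ltn_trans hca; rewrite cA; apply: subset_leq_card; apply/subsetP => l.
  by rewrite inE => /andP[hsl plb]; apply: hsubA.
Qed.


Lemma I2_neq0 (j j' : 'I_2) : j != ord0 -> j' != ord0 -> j = j'.
Proof.
case: j => [[|[|m]] hj] //; case: j' => [[|[|m']] hj'] // _ _; exact: val_inj.
Qed.

Lemma loc_diff c (j j' : 'I_2) : j != j' ->
  `|x c - loc y j| = `|x c - loc y j'| -> `|x c - y.1| = `|x c - y.2|.
Proof.
move=> hjj; rewrite /loc.
case: (eqVneq j ord0) => [e1|h1]; case: (eqVneq j' ord0) => [e2|h2] //.
- by move: hjj; rewrite e1 e2 eqxx.
- by move: hjj; rewrite (I2_neq0 h1 h2) eqxx.
Qed.

Lemma ES_neq (hval : forall c j, 0 <= val c j)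
  (hmid : forall c, `|x c - y.1| = `|x c - y.2| -> y.1 = y.2)
  (hne : y.1 != y.2) s s' : NE s -> NE s' ->
  forall a, util k1 k2 prio x y s a <= util k1 k2 prio x y s' a.
Proof.
move=> hs hs'.
pose bad c := util k1 k2 prio x y s' c < util k1 k2 prio x y s c.
pose phi c := `|x c - loc y (s c)|.
pose N a := #|[set c | bad c && (phi c < phi a)]|.
suff H : forall m a, (N a < m)%N -> ~~ bad a.
  by move=> a; rewrite leNgt; apply: (H (N a).+1).
elim=> // m IH a hN; apply/negP => bada.
have [hca ua [b [s'b sb pba cb' cb]]] := step hval hs hs' bada.
set j := s a in hca ua s'b sb pba cb' cb.
have u'b : util k1 k2 prio x y s' b = val b j by rewrite util_E s'b cb'.
have vb : val b j <= util k1 k2 prio x y s b by have := NE_dev hs b j; rewrite cb.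
have vab : val a j <= val b j by rewrite /val lerD2l lerN2; exact: prec_le pba.
have ubE := util_E s b.
case: (ltrP (util k1 k2 prio x y s' b) (util k1 k2 prio x y s b)) => hb.
- have badb : bad b by [].
  move: ubE; case: ifP => _ ubE; last first.
    by move: hb; rewrite ubE u'b ltNge hval.
  have phib : phi b < phi a.
    move: hb; rewrite ubE u'b /val /phi /j ltrD2l ltrN2 => h.
    apply: (lt_le_trans h); exact: prec_le pba.
  have hNb : (N b < N a)%N.
    apply: proper_card; apply/properP; split.
      apply/subsetP => c; rewrite !inE => /andP[-> hc] /=; exact: lt_trans hc phib.
    by exists b; rewrite !inE ?badb ?phib ?ltxx.
  by move: (IH b (leq_trans hNb hN)); rewrite badb.
- have eqb : util k1 k2 prio x y s b = val b j by apply/le_anti; rewrite vb -u'b hb.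
  move: ubE; case: ifP => _ ubE.
    have : `|x b - loc y (s b)| = `|x b - loc y j|.
      by move: eqb; rewrite ubE /val => /addrI /oppr_inj.
    by move/(loc_diff sb)/hmid/eqP; rewrite (negbTE hne).
  have : val a j <= 0 by rewrite -ubE eqb.
  move=> h0; move: bada; rewrite /bad ua.
  by move=> h1; move: (lt_le_trans h1 h0); rewrite ltNge util_ge0.
Qed.


Definition ord1' : 'I_2 := @Ordinal 2 1 isT.

Lemma I2_cases (j : 'I_2) : j = ord0 \/ j = ord1'.
Proof. case: (eqVneq j ord0) => [->|h]; [by left|right; exact: I2_neq0]. Qed.

Lemma cnt_split s t a :
  (forall j, loc y j = t) ->
  #|[set l | precedes prio x t l a]| = (cnt s ord0 a + cnt s ord1' a)%N.
Proof.
move=> hl; rewrite -(cardsID [set l | s l == ord0]) /cnt !hl; congr (_ + _)%N.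
  by apply: eq_card => l; rewrite !inE andbC.
apply: eq_card => l; rewrite !inE.
by case: (I2_cases (s l)) => ->; rewrite ?andbF ?andbT.
Qed.

Lemma ES_eq (hval : forall c j, 0 <= val c j)
  (heq : y.1 = y.2) s s' : NE s -> NE s' ->
  forall a, util k1 k2 prio x y s a <= util k1 k2 prio x y s' a.
Proof.
move=> hs hs'.
have hl : forall j, loc y j = y.1 by move=> j; rewrite /loc heq; case: ifP.
have hv : forall c j, val c j = val c ord0 by move=> c j; rewrite /val !hl.
pose bad c := util k1 k2 prio x y s' c < util k1 k2 prio x y s c.
move=> a0; rewrite leNgt; apply/negP => bad0.
have bad0' : bad a0 by [].
case: (arg_minnP (rk y.1) bad0') => a bada hmin0.
have hmin : forall l, bad l -> (rk y.1 a <= rk y.1 l)%N by move=> l hl'; exact: hmin0.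
have [hca ua _] := step hval hs hs' bada.
set j := s a in hca ua.
have vpos : 0 < val a j.
  by rewrite -ua; apply: le_lt_trans bada; exact: util_ge0.
have hc' : forall j', (cap k1 k2 j' <= cnt s' j' a)%N.
  move=> j'; rewrite leqNgt; apply/negP => hn.
  have := NE_dev hs' a j'; rewrite hn hv -(hv a j) => h.
  by move: (le_lt_trans h bada); rewrite ua ltxx.
have hpre : forall l, precedes prio x y.1 l a ->
   (cnt s (s l) l < cap k1 k2 (s l))%N /\ (cnt s' (s' l) l < cap k1 k2 (s' l))%N.
  move=> l pla.
  have vl : val a j <= val l j.
    by rewrite /val lerD2l lerN2 hl; exact: prec_le pla.
  have cl : (cnt s j l < cap k1 k2 j)%N.
    apply: leq_ltn_trans hca; apply: subset_leq_card; apply/subsetP => p.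
    by rewrite !inE hl => /andP[-> h] /=; exact: prec_trans h pla.
  have ul : val l j <= util k1 k2 prio x y s l by have := NE_dev hs l j; rewrite cl.
  have upos : 0 < util k1 k2 prio x y s l by apply: lt_le_trans ul; exact: lt_le_trans vl.
  have nb : ~~ bad l.
    apply/negP => bl; have := hmin l bl; have := rk_lt pla => h1 h2.
    by move: (leq_trans h1 h2); rewrite ltnn.
  have upos' : 0 < util k1 k2 prio x y s' l by move: nb; rewrite /bad -leNgt; exact: lt_le_trans.
  split.
    by move: upos; rewrite util_E; case: ifP => //; rewrite ltxx.
  by move: upos'; rewrite util_E; case: ifP => //; rewrite ltxx.
have hle : forall j', (cnt s j' a <= cap k1 k2 j')%N.
  move=> j'; apply: (card_served_le (s:=s) (j:=j')) => l; rewrite inE => /andP[/eqP slj pla].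
  have pla' : precedes prio x y.1 l a by rewrite -(hl j').
  have [h _] := hpre l pla'.
  split => //. rewrite -slj. exact h.
have e1 := cnt_split s a hl.
have e2 := cnt_split s' a hl.
have hk : (cap k1 k2 ord0 + cap k1 k2 ord1' = k1 + k2)%N by [].
have h1 : (k1 + k2 <= cnt s' ord0 a + cnt s' ord1' a)%N by rewrite -hk leq_add.
have h2 : (cnt s ord0 a + cnt s ord1' a < k1 + k2)%N.
  rewrite -hk; case: (I2_cases j) => ej; rewrite ej in hca.
    by rewrite -addSn leq_add.
  by rewrite -addnS leq_add.
by move: (leq_trans h1 (eq_leq (etrans (esym e2) e1))); rewrite leqNgt h2.
Qed.


Lemma ES_le (hval : forall c j, 0 <= val c j)
  (hmid : forall c, `|x c - y.1| = `|x c - y.2| -> y.1 = y.2) s s' :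
  NE s -> NE s' -> forall a, util k1 k2 prio x y s a <= util k1 k2 prio x y s' a.
Proof.
move=> hs hs'; case: (eqVneq y.1 y.2) => h.
  exact: ES_eq.
exact: ES_neq.
Qed.

Lemma ES_SW (hval : forall c j, 0 <= val c j)
  (hmid : forall c, `|x c - y.1| = `|x c - y.2| -> y.1 = y.2) s s' :
  NE s -> NE s' -> SW k1 k2 prio x y s = SW k1 k2 prio x y s'.
Proof.
move=> hs hs'; apply/le_anti; rewrite /SW; apply/andP; split;
  apply: ler_sum => a _; exact: ES_le.
Qed.

End Abs.

Lemma bu_mono (R : realType) n k1 k2 (prio : {perm 'I_n}) (x : 'I_n -> R)
  (y y' : R * R) s c :
  (forall j, 0 <= 1 - `|x c - loc y j|) ->
  (forall j, `|x c - loc y j| <= `|x c - loc y' j|) ->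
  (forall j l, precedes prio x (loc y j) l c -> precedes prio x (loc y' j) l c) ->
  best_util k1 k2 prio x y' s c <= best_util k1 k2 prio x y s c.
Proof.
move=> h0 hd hp.
have key : forall j, util k1 k2 prio x y' (upd s c j) c <= util k1 k2 prio x y (upd s c j) c.
  move=> j; rewrite !util_upd.
  have hc : (cnt prio x y s j c <= cnt prio x y' s j c)%N.
    apply: subset_leq_card; apply/subsetP => l; rewrite !inE => /andP[-> h] /=.
    exact: hp.
  case h1 : (cnt prio x y s j c < cap k1 k2 j)%N.
    case: ifP => _; last exact: h0.
    rewrite /val lerD2l lerN2; exact: hd.
  have -> : (cnt prio x y' s j c < cap k1 k2 j)%N = false.
    by apply/negP => h2; move: (leq_ltn_trans hc h2); rewrite h1.
  by [].
rewrite /best_util; rewrite ge_max !le_max.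
by rewrite !key orbT.
Qed.

Lemma cnt_enum n (P : pred 'I_n) : count P (enum 'I_n) = #|[set l | P l]|.
Proof.
rewrite cardsE cardE /enum_mem size_filter /= count_filter.
by apply: eq_count => l; rewrite /= andbT.
Qed.

Section PMl.
Variables (R : realType) (n : nat).

Lemma sr_size (x : 'I_n -> R) : size (sorted_reports x) = n.
Proof. by rewrite /sorted_reports size_sort size_map size_enum_ord. Qed.

Lemma sr_sorted (x : 'I_n -> R) : sorted <=%R (sorted_reports x).
Proof. exact: sort_le_sorted. Qed.

Lemma sr_perm (x : 'I_n -> R) : perm_eq (sorted_reports x) [seq x i | i <- enum 'I_n].
Proof. by rewrite /sorted_reports perm_sort perm_refl. Qed.

Lemma sr_count (x : 'I_n -> R) (P : pred R) :
  count P (sorted_reports x) = #|[set l | P (x l)]|.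
Proof. by rewrite (seq.permP (sr_perm x)) count_map cnt_enum. Qed.

Lemma sr_mem (x : 'I_n -> R) m : (m < n)%N -> exists l, (sorted_reports x)`_m = x l.
Proof.
move=> hm.
have : (sorted_reports x)`_m \in [seq x i | i <- enum 'I_n].
  by rewrite -(perm_mem (sr_perm x)) mem_nth // sr_size.
by case/mapP => l _ e; exists l.
Qed.

Lemma sr_index (x : 'I_n -> R) c : exists2 k, (k < n)%N & (sorted_reports x)`_k = x c.
Proof.
have hin : x c \in sorted_reports x.
  by rewrite (perm_mem (sr_perm x)); apply: map_f; rewrite mem_enum.
exists (index (x c) (sorted_reports x)); last exact: nth_index.
by move: hin; rewrite -index_mem sr_size.
Qed.

Lemma sr_mono (x : 'I_n -> R) k m : (k <= m)%N -> (m < n)%N ->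
  (sorted_reports x)`_k <= (sorted_reports x)`_m.
Proof.
move=> hkm hm.
apply: (le_sorted_leq_nth 0 (sr_sorted x)) => //; rewrite inE sr_size //.
exact: leq_ltn_trans hm.
Qed.

Lemma os_lt (x : 'I_n -> R) m : (m < n)%N ->
  (#|[set l | (x l < (sorted_reports x)`_m)%R]| <= m)%N.
Proof.
move=> hm; rewrite -(sr_count x (fun u => u < (sorted_reports x)`_m)).
set t := (sorted_reports x)`_m; set z := sorted_reports x.
rewrite -(cat_take_drop m z) count_cat.
have -> : count (fun u => u < t) (drop m z) = 0%N.
  apply/eqP; rewrite -leqn0 leqNgt -has_count; apply/negP => /(has_nthP 0) [k].
  rewrite size_drop nth_drop => hk; rewrite ltNge sr_mono ?leq_addr //.
  by rewrite -(sr_size x) -ltn_subRL.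
rewrite addn0; apply: leq_trans (count_size _ _) _. apply: (leq_trans (eq_leq (size_take m z))).
by rewrite /z sr_size hm.
Qed.

Lemma os_le (x : 'I_n -> R) m : (m < n)%N ->
  (m < #|[set l | (x l <= (sorted_reports x)`_m)%R]|)%N.
Proof.
move=> hm; rewrite -(sr_count x (fun u => u <= (sorted_reports x)`_m)).
set t := (sorted_reports x)`_m; set z := sorted_reports x.
rewrite -(cat_take_drop m.+1 z) count_cat.
have hsz : size (take m.+1 z) = m.+1.
  rewrite size_take /z sr_size; case: ltnP => //; lia.
have hall : all (fun u => u <= t) (take m.+1 z).
  apply/(all_nthP 0) => k; rewrite hsz => hk; rewrite nth_take //.
  apply: sr_mono => //; lia.
have hc : count (fun u => u <= t) (take m.+1 z) = m.+1.
  by move: hall; rewrite all_count => /eqP e; exact: (etrans e hsz).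
by rewrite hc leq_addr.
Qed.

Lemma os_move (x : 'I_n -> R) c t m : (m < n)%N ->
  let y := (sorted_reports x)`_m in
  let y' := (sorted_reports (upd x c t))`_m in
  (x c < y -> y <= y') /\ (y < x c -> y' <= y).
Proof.
move=> hm y y'; split => h.
- rewrite leNgt; apply/negP => h'.
  have h1 := os_le (upd x c t) hm.
  have h2 := os_lt x hm.
  have : (#|[set l | (upd x c t l <= y')%R] | <= #|[set l | (x l < y)%R]|)%N.
    apply: subset_leq_card; apply/subsetP => l; rewrite !inE /upd.
    case: eqP => [->|_] // hl; exact: le_lt_trans hl h'.
  move=> h3; move: (leq_trans h1 (leq_trans h3 h2)); by rewrite ltnn.
- rewrite leNgt; apply/negP => h'.
  have h1 := os_le x hm.
  have h2 := os_lt (upd x c t) hm.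
  have : (#|[set l | (x l <= y)%R] | <= #|[set l | (upd x c t l < y')%R]|)%N.
    apply: subset_leq_card; apply/subsetP => l; rewrite !inE /upd.
    case: eqP => [->|_] hl; last exact: le_lt_trans hl h'.
    by move: (lt_le_trans h hl); rewrite ltxx.
  move=> h3; move: (leq_trans h1 (leq_trans h3 h2)); by rewrite ltnn.
Qed.

End PMl.


Lemma geo_lt (R : realType) (p q t t' : R) : p < t -> t <= t' ->
  [/\ `|p - t| <= `|p - t'|,
      (`|q - t| < `|p - t| -> `|q - t'| < `|p - t'|) &
      (`|q - t| = `|p - t| -> `|q - t'| <= `|p - t'|)].
Proof.
move=> h1 h2.
have e1 : `|p - t| = t - p by rewrite distrC gtr0_norm // subr_gt0.
have e2 : `|p - t'| = t' - p by rewrite distrC gtr0_norm // subr_gt0; exact: lt_le_trans h2.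
rewrite e1 e2; split.
- lra.
- rewrite !ltr_norml => /andP[a b]; apply/andP; split; lra.
- move=> e; rewrite ler_norml; apply/andP.
  have [hq|hq] := lerP 0 (q - t).
    by move: e; rewrite ger0_norm // => e; split; lra.
  by move: e; rewrite ltr0_norm // => e; split; lra.
Qed.

Lemma geo_gt (R : realType) (p q t t' : R) : t < p -> t' <= t ->
  [/\ `|p - t| <= `|p - t'|,
      (`|q - t| < `|p - t| -> `|q - t'| < `|p - t'|) &
      (`|q - t| = `|p - t| -> `|q - t'| <= `|p - t'|)].
Proof.
move=> h1 h2.
have e1 : `|p - t| = p - t by rewrite gtr0_norm // subr_gt0.
have e2 : `|p - t'| = p - t' by rewrite gtr0_norm // subr_gt0; exact: le_lt_trans h1.
rewrite e1 e2; split.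
- lra.
- rewrite !ltr_norml => /andP[a b]; apply/andP; split; lra.
- move=> e; rewrite ler_norml; apply/andP.
  have [hq|hq] := lerP 0 (q - t).
    by move: e; rewrite ger0_norm // => e; split; lra.
  by move: e; rewrite ltr0_norm // => e; split; lra.
Qed.

Lemma geo (R : realType) (p q t t' : R) : (p < t -> t <= t') -> (t < p -> t' <= t) ->
  [/\ `|p - t| <= `|p - t'|,
      (`|q - t| < `|p - t| -> `|q - t'| < `|p - t'|) &
      (`|q - t| = `|p - t| -> `|q - t'| <= `|p - t'|)].
Proof.
move=> h1 h2.
case: (ltgtP p t) => hpt.
- exact: geo_lt hpt (h1 hpt).
- exact: geo_gt hpt (h2 hpt).
- subst; rewrite subrr normr0; split.
  + exact: normr_ge0.
  + by rewrite ltNge normr_ge0.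
  + by move/eqP; rewrite normr_eq0 subr_eq0 => /eqP ->.
Qed.

Lemma abs_side (R : realType) (a b d : R) : (a <= b /\ b <= d) \/ (d <= a /\ b <= d) ->
  `|a - b| = `|a - d| -> b = d.
Proof.
case=> [[h1 h2]|[h1 h2]].
- rewrite (distrC a b) (distrC a d) !ger0_norm ?subr_ge0 //; last exact: le_trans h2.
  lra.
- rewrite !ger0_norm ?subr_ge0 //; last exact: le_trans h2 h1.
  lra.
Qed.

Unset Implicit Arguments.

Theorem theorem7 (R : realType) (n k1 k2 : nat) (prio : {perm 'I_n})
    (v : R * R) (i : nat) :
  (k1 + k2 < n)%N ->
  in01 v.1 -> in01 v.2 ->
  (1 <= i <= n.-1)%N ->
  Num.floor ((n.-1)%:R * v.1) = (i.-1)%:Z ->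
  Num.floor ((n.-1)%:R * v.2) = i%:Z ->
  equilibrium_stable k1 k2 prio (PM v).
Proof.
move=> hk hv1 hv2 /andP[hi1 hi2] hf1 hf2.
have hin : (i < n)%N by lia.
have p1 : pidx n v.1 = i.-1 by rewrite /pidx hf1.
have p2 : pidx n v.2 = i by rewrite /pidx hf2.
pose mj (j : 'I_2) := if j == ord0 then i.-1 else i.
have locE : forall (x : 'I_n -> R) j, loc (PM v x) j = (sorted_reports x)`_(mj j).
  by move=> x j; rewrite /loc /PM /mj /=; case: ifP; rewrite ?p1 ?p2.
have hmj : forall j, (mj j < n)%N by move=> j; rewrite /mj; case: ifP => _; lia.
have hval : forall x : 'I_n -> R, (forall l, in01 (x l)) ->
    forall c j, 0 <= 1 - `|x c - loc (PM v x) j|.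
  move=> x hx c j; rewrite locE; have [l ->] := sr_mem x (hmj j).
  move: (hx c) (hx l); rewrite /in01 => /andP[a1 a2] /andP[b1 b2].
  rewrite subr_ge0 ler_norml; apply/andP; split; lra.
split.
- move=> c x xi' s hx hxi; apply: bu_mono.
  + exact: hval.
  + move=> j; rewrite !locE.
    have [h1 h2] := os_move x c xi' (hmj j).
    by have [] := @geo R (x c) (x c) _ _ h1 h2.
  + move=> j l; rewrite !locE.
    have [h1 h2] := os_move x c xi' (hmj j).
    have [_ hb1 hb2] := @geo R (x c) (x l) _ _ h1 h2.
    rewrite /precedes => /orP[h|/andP[/eqP e h]].
      by rewrite hb1.
    move: (hb2 e); rewrite le_eqVlt => /orP[/eqP ->|->] //.
    by rewrite eqxx h orbT.
- move=> x hx s s' hs hs'; apply: ES_SW => //.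
  + exact: hval.
  + move=> c; have [k hkn e] := sr_index x c.
    rewrite /PM /= p1 p2 -e; apply: abs_side.
    have hm : (sorted_reports x)`_(i.-1) <= (sorted_reports x)`_i.
      by apply: sr_mono => //; lia.
    case: (leqP k i.-1) => hki.
      by left; split => //; apply: sr_mono => //; lia.
    by right; split => //; apply: sr_mono => //; lia.
Qed.
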